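(* Let $d\ge2$ and $\overrightarrow{w}\in(0,\infty)^d$ with $w_1=\max\{w_1,\dots,w_d\}$ and $2w_1=\sum_{i=1}^dw_i$. Then for every random vector $\overrightarrow{U}=(U_1,\dots,U_d)$ with uniform$[0,1]$ marginals, $$\mathrm{Cov}\left(U_1,\sum_{i=1}^dw_iU_i\right)\ge0,$$ with equality if and only if $\overrightarrow{U}$ is $\overrightarrow{w}$-CM.
   Context: A random vector $\overrightarrow{U}=(U_1,\dots,U_d)$ with each $U_i$ uniform on $[0,1]$ is $\overrightarrow{w}$-CM if $P\left(\sum_{i=1}^d w_iU_i=\frac12\sum_{i=1}^d w_i\right)=1$. *)

(* Defs.v *)
From HB Require Import structures.
From mathcomp Require Import all_boot all_order all_algebra.
From mathcomp Require Import all_classical all_reals all_analysis.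
Set Implicit Arguments. Unset Strict Implicit. Unset Printing Implicit Defensive.
Import Order.TTheory GRing.Theory Num.Theory.
Local Open Scope classical_set_scope.
Local Open Scope ring_scope.

Definition uniform01 d (T : measurableType d) (R : realType)
  (P : probability T R) (X : {RV P >-> R}) : Prop :=
  distribution P X = uniform_prob (@ltr01 R).

Definition wsum d (T : measurableType d) (R : realType) (P : probability T R)
  (n : nat) (w : 'I_n -> R) (U : 'I_n -> {RV P >-> R}) : T -> R :=
  fun t => \sum_(i < n) w i * U i t.

Definition wCM d (T : measurableType d) (R : realType) (P : probability T R)
  (n : nat) (w : 'I_n -> R) (U : 'I_n -> {RV P >-> R}) : Prop :=
  P [set t | wsum w U t = 2^-1 * \sum_(i < n) w i] = 1%E.

(* Main.v *)
Require Import Defs.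
From HB Require Import structures.
From mathcomp Require Import all_boot all_order all_algebra.
From mathcomp Require Import all_classical all_reals all_analysis.
Import Order.TTheory GRing.Theory Num.Theory.
Local Open Scope classical_set_scope.
Local Open Scope ring_scope.

From mathcomp Require Import ring lra.
From mathcomp Require Import measurable_realfun uniform_distribution beta_distribution.

Section S.
Set Implicit Arguments. Unset Strict Implicit. Unset Printing Implicit Defensive.
Import Num.Def numFieldTopology.Exports numFieldNormedType.Exports.
Context (R : realType) (dT : measure_display) (T : measurableType dT) (P : probability T R).

Definition bdd (f : T -> R) := measurable_fun setT f /\ exists M : R, forall t, `|f t| <= M.

Lemma bdd_int f : bdd f -> P.-integrable setT (EFin \o f).
Proof.
move=> [mf [M hM]].
apply: (@le_integrable _ _ _ P setT measurableT _ (EFin \o cst M)).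
- exact/measurable_EFinP.
- move=> t _ /=; rewrite lee_fin (le_trans (hM t))//.
  exact: ler_norm.
- exact: finite_measure_integrable_cst.
Qed.

Lemma bdd_cst c : bdd (cst c).
Proof. split => //; exists `|c| => t //. Qed.

Lemma bddD f g : bdd f -> bdd g -> bdd (f \+ g).
Proof.
move=> [mf [M hM]] [mg [N hN]]; split; first exact: measurable_funD.
exists (M + N) => t /=; rewrite (le_trans (ler_normD _ _))//; exact: lerD.
Qed.

Lemma bddM f g : bdd f -> bdd g -> bdd (f \* g).
Proof.
move=> [mf [M hM]] [mg [N hN]]; split; first exact: measurable_funM.
exists (M * N) => t /=; rewrite normrM ler_pM//.
Qed.

Lemma bddN f : bdd f -> bdd (\- f).
Proof.
move=> [mf [M hM]]; split; first exact: measurableT_comp.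
by exists M => t /=; rewrite normrN.
Qed.

Lemma bdd_sum (I : Type) (s : seq I) (Pr : pred I) (F : I -> T -> R) :
  (forall i, bdd (F i)) -> bdd (fun t => \sum_(i <- s | Pr i) F i t).
Proof.
move=> hF; elim: s => [|a s IH].
  by under eq_fun do rewrite big_nil; exact: bdd_cst.
case: (boolP (Pr a)) => Pa.
  under eq_fun do rewrite big_cons Pa.
  by have := bddD (hF a) IH.
by under eq_fun do rewrite big_cons (negbTE Pa).
Qed.


Definition clamp (x : R) : R := Order.min (Order.max x 0) 1.

Lemma clamp01 x : 0 <= clamp x <= 1.
Proof.
rewrite /clamp; apply/andP; split.
  by rewrite le_min le_max lexx orbT ler01.
by rewrite ge_min lexx orbT.
Qed.

Lemma clampE x : 0 <= x <= 1 -> clamp x = x.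
Proof. by case/andP=> h0 h1; rewrite /clamp max_l// min_l. Qed.

Lemma measurable_clamp : measurable_fun setT clamp.
Proof.
have h := measurable_minr (measurable_maxr (@measurable_id _ R setT) (measurable_cst (0:R))) (measurable_cst (1:R)).
exact: h.
Qed.

Lemma unif_ae (X : {RV P >-> R}) : uniform01 X ->
  {ae P, forall t, 0 <= X t <= 1}.
Proof.
move=> hX.
have h1 : P (X @^-1` `[0%R, 1%R]%classic) = 1%E.
  transitivity (distribution P X `[0%R, 1%R]%classic); first by [].
  by rewrite hX /uniform_prob integral_uniform_pdf1.
exists (~` (X @^-1` `[0%R, 1%R]%classic)); split.
- apply: measurableC; exact: measurable_funPTI.
- by rewrite probability_setC ?h1 ?subee//; exact: measurable_funPTI.
- move=> t /= nt ht; apply: nt; move: ht; by rewrite /= in_itv.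
Qed.

Lemma unif_same (X Y : {RV P >-> R}) (g : R -> R) :
  uniform01 X -> uniform01 Y ->
  measurable_fun setT g -> (forall x, 0 <= g x) ->
  (\int[P]_t (g (X t))%:E = \int[P]_t (g (Y t))%:E)%E.
Proof.
move=> hX hY mg g0.
have mg' : measurable_fun setT (EFin \o g) by exact/measurable_EFinP.
have g0' : forall y, (0 <= (EFin \o g) y)%E by move=> y; rewrite /= lee_fin.
rewrite -(@ge0_integral_distribution _ _ _ _ _ P X (EFin \o g))//.
rewrite -(@ge0_integral_distribution _ _ _ _ _ P Y (EFin \o g))//.
apply: (@eq_measure_integral _ _ _ setT _ _ (EFin \o g)) => A mA _.
exact: (etrans (congr1 (fun f => f A) hX) (esym (congr1 (fun f => f A) hY))).
Qed.

Lemma unif_itv (r : R) : 0 <= r <= 1 ->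
  uniform_prob (@ltr01 R) `]r, +oo[%classic = (1 - r)%:E.
Proof.
case/andP=> r0 r1.
rewrite /uniform_prob integral_uniform_pdf.
have -> : (`]r, +oo[%classic `&` `[0%R, 1%R]%classic) = `]r, 1%R]%classic.
  apply/seteqP; split => x /=; rewrite !in_itv /=.
    by case=> /andP[rx _] /andP[_ ->]; rewrite rx.
  case/andP=> rx x1; split; first by rewrite rx.
  by rewrite x1 andbT (le_trans r0)// ltW.
rewrite (eq_integral (cst 1%E)); last first.
  move=> x; rewrite inE /= in_itv /= => /andP[rx x1].
  by rewrite /uniform_pdf x1 (le_trans r0 (ltW rx)) subr0 invr1.
rewrite integral_cst//= mul1e lebesgue_measure_itv /= lte_fin.
have [rl1|h] := ltP r 1; first by rewrite EFinB.
have -> : r = 1 by apply/le_anti; rewrite r1.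
by rewrite subrr.
Qed.

Definition bf (r : R) : R := (@XMonemX R 0 1 \_ (`[0%R, 1%R]%classic : set R)) r.

Lemma unif_clamp_mean (X : {RV P >-> R}) : uniform01 X ->
  (\int[P]_t (clamp (X t))%:E = (2^-1)%:E)%E.
Proof.
move=> hX.
have mc : (clamp \o (X : T -> R)) \in mfun.
  by rewrite inE; apply: measurableT_comp => //; exact: measurable_clamp.
pose cX : {mfun T >-> R} := Sub (clamp \o (X : T -> R)) mc.
have cXE t : cX t = clamp (X t) by [].
have h := @ge0_expectation_ccdf _ _ _ P cX.
transitivity ('E_P[cX])%E; first by rewrite unlock.
rewrite h; last by move=> t; rewrite cXE; case/andP: (clamp01 (X t)).
transitivity (\int[lebesgue_measure]_(r in `[0%R, +oo[%classic)
   (bf r)%:E)%E.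
  apply: eq_integral => r; rewrite inE /= in_itv /= andbT => r0.
  transitivity (P (cX @^-1` `]r, +oo[%classic)); first by [].
  have [r1|r1] := ltP r 1.
  - have -> : cX @^-1` `]r, +oo[%classic = X @^-1` `]r, +oo[%classic.
      have r0' : (r < 0) = false by rewrite ltNge r0.
      by apply/seteqP; split=> t /=; rewrite !in_itv /= !andbT /clamp lt_min lt_max r1 andbT r0' orbF.
    transitivity (distribution P X `]r, +oo[%classic); first by [].
    rewrite (congr1 (fun f => f `]r, +oo[%classic) hX) unif_itv ?r0 ?ltW//.
    rewrite /bf patchE mem_set /=; last by rewrite in_itv /= r0 ltW.
    by rewrite XMonemX0n expr1.
  - have -> : cX @^-1` `]r, +oo[%classic = set0.
      apply/seteqP; split=> t //=; rewrite in_itv /= andbT => h1.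
      have := clamp01 (X t) => /andP[_ h2].
      by have := lt_le_trans h1 h2; rewrite ltNge r1.
    rewrite measure0 /bf patchE; case: ifPn => // /set_mem.
    rewrite /= in_itv /= => /andP[_ rle1].
    have -> : r = 1 by apply/le_anti; rewrite rle1.
    by rewrite XMonemX0n expr1 (_ : @unstable.onem R 1 = 0) //; exact: subrr.
rewrite integral_mkcond.
transitivity (\int[lebesgue_measure]_r (bf r)%:E)%E.
  apply: eq_integral => r _; rewrite patchE; case: ifPn => //.
  move/negP => hr; rewrite /bf patchE; case: ifPn => //.
  move/set_mem; rewrite /= in_itv /= => /andP[r0 _].
  by exfalso; apply: hr; apply/mem_set; rewrite /= in_itv /= r0.
by rewrite -(EFin_beta_fun 1 2) beta_fun1Sn.
Qed.

End S.

Section Main.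
Set Implicit Arguments. Unset Strict Implicit. Unset Printing Implicit Defensive.
Import Num.Def numFieldTopology.Exports numFieldNormedType.Exports.
Context (R : realType) (dT : measure_display) (T : measurableType dT) (P : probability T R).
Context (n : nat) (w : 'I_n -> R) (U : 'I_n -> {RV P >-> R}).
Hypothesis Uunif : forall i, uniform01 (U i).
Variable i1 : 'I_n.
Hypothesis wpos : forall i, 0 < w i.
Hypothesis wbal : 2 * w i1 = \sum_(i < n) w i.

Local Notation bddP := (@bdd R dT T).

Definition V i t := clamp (U i t).
Definition m : R := 2^-1.
Definition Y i t := V i t - m.

Lemma aeV : {ae P, forall t, forall i, V i t = U i t}.
Proof.
apply: filter_forall => i.
by apply: filterS (unif_ae (Uunif i)) => t h; rewrite /V clampE.
Qed.

Lemma bddV i : bddP (V i).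
Proof.
split.
  by apply: measurableT_comp => //; exact: measurable_clamp.
exists 1 => t; have /andP[h0 h1] := clamp01 (U i t).
by rewrite /V ger0_norm.
Qed.

Lemma bddY i : bddP (Y i).
Proof. exact: (bddD (bddV i) (@bdd_cst R dT T (- m))). Qed.

Lemma EV i : (\int[P]_t (V i t)%:E = m%:E)%E.
Proof. exact: unif_clamp_mean. Qed.

Lemma EY2 i : (\int[P]_t (Y i t ^+ 2)%:E = \int[P]_t (Y i1 t ^+ 2)%:E)%E.
Proof.
apply: (unif_same (g := fun x => (clamp x - m) ^+ 2)) => //.
- apply: measurable_funX; apply: measurable_funB => //; exact: measurable_clamp.
- by move=> x; exact: sqr_ge0.
Qed.

Lemma int_sum (I : finType) (Pr : pred I) (F : I -> T -> R) :
  (forall i, bddP (F i)) ->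
  (\int[P]_t (\sum_(i | Pr i) F i t)%:E = \sum_(i | Pr i) \int[P]_t (F i t)%:E)%E.
Proof.
move=> hF; under eq_integral do rewrite -sumEFin.
by apply: (integral_sum measurableT) => i; exact: bdd_int.
Qed.

Lemma mU i : measurable_fun setT (U i : T -> R).
Proof. exact: measurable_funP. Qed.

Lemma mwsum : measurable_fun setT (wsum w U).
Proof.
apply: measurable_sum => i; apply: measurable_funM => //; exact: mU.
Qed.

Lemma EU i : (\int[P]_t (U i t)%:E = m%:E)%E.
Proof.
rewrite -(EV i); apply: ae_eq_integral => //.
- exact/measurable_EFinP/mU.
- exact: (measurable_int _ (bdd_int P (bddV i))).
- by apply: filterS aeV => t h _; rewrite h.
Qed.

Lemma ES : (\int[P]_t (wsum w U t)%:E = (\sum_i w i * m)%:E)%E.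
Proof.
transitivity (\int[P]_t (\sum_i w i * V i t)%:E)%E.
  apply: ae_eq_integral => //.
  - exact/measurable_EFinP/mwsum.
  - apply/measurable_EFinP/measurable_sum => i; apply: measurable_funM => //.
    by case: (bddV i).
  - apply: filterS aeV => t h _; rewrite /wsum; apply: congr1.
    by apply: eq_bigr => i _; rewrite h.
rewrite int_sum; last by move=> i; have := bddM (@bdd_cst R dT T (w i)) (bddV i).
rewrite -sumEFin; apply: eq_bigr => i _.
under eq_integral do rewrite EFinM.
by rewrite (integralZl measurableT (bdd_int P (bddV i))) EV.
Qed.

Lemma cov_eq : covariance P (U i1) (wsum w U) =
  (\int[P]_t (Y i1 t * \sum_i w i * Y i t)%:E)%E.
Proof.
rewrite covariance.unlock expectation.unlock EU ES /=.
apply: ae_eq_integral => //.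
- apply/measurable_EFinP; apply: measurable_funM.
    by apply: measurable_funB => //; exact: mU.
  by apply: measurable_funB => //; exact: mwsum.
- apply/measurable_EFinP; apply: measurable_funM; first by case: (bddY i1).
  apply: measurable_sum => i; apply: measurable_funM => //; by case: (bddY i).
- apply: filterS aeV => t h _ /=; rewrite /Y !h.
  apply: congr1; rewrite /wsum /=; congr (_ * _).
  transitivity (\sum_i w i * U i t - \sum_i w i * m); first by [].
  by rewrite -sumrB; apply: eq_bigr => i _; rewrite h mulrBr.
Qed.

Definition A t := \sum_(i | i != i1) w i / 2 * (Y i1 t + Y i t) ^+ 2.
Definition B t := \sum_(i | i != i1) w i / 2 * (Y i1 t ^+ 2 - Y i t ^+ 2).

Lemma wrest : \sum_(i | i != i1) w i = w i1.
Proof. by move: wbal; rewrite (bigD1 i1) //= => h; lra. Qed.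

Lemma decomp t : Y i1 t * \sum_i w i * Y i t = A t + B t.
Proof.
rewrite /A /B -big_split /=.
rewrite [RHS](eq_bigr (fun i => w i * Y i1 t ^+ 2 + Y i1 t * (w i * Y i t))); last first.
  move=> i _ /=; rewrite -mulrDr (_ : (Y i1 t + Y i t) ^+ 2 + (Y i1 t ^+ 2 - Y i t ^+ 2)
     = 2 * (Y i1 t ^+ 2 + Y i1 t * Y i t)); last by ring.
  rewrite mulrA divfK; first by ring.
  by rewrite pnatr_eq0.
rewrite big_split /= -mulr_suml -mulr_sumr wrest (bigD1 i1) //=; ring.
Qed.

Lemma A_ge0 t : 0 <= A t.
Proof.
apply: sumr_ge0 => i _; apply: mulr_ge0; last exact: sqr_ge0.
by apply: divr_ge0; [exact: ltW | exact: ler0n].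
Qed.

Lemma bddsq (f : T -> R) : bddP f -> bddP (fun t => f t ^+ 2).
Proof.
move=> hf; have := bddM hf hf.
by have -> : (fun t => f t ^+ 2) = f \* f by apply/funext=> t; rewrite expr2.
Qed.

Lemma bddA : bddP A.
Proof.
apply: bdd_sum => i.
have := bddM (@bdd_cst R dT T (w i / 2)) (bddsq (bddD (bddY i1) (bddY i))).
by [].
Qed.

Lemma bddBi i : bddP (fun t => Y i1 t ^+ 2 - Y i t ^+ 2).
Proof. by have := bddD (bddsq (bddY i1)) (bddN (bddsq (bddY i))). Qed.

Lemma bddB : bddP B.
Proof.
apply: bdd_sum => i.
by have := bddM (@bdd_cst R dT T (w i / 2)) (bddBi i).
Qed.

Lemma intB : (\int[P]_t (B t)%:E = 0)%E.
Proof.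
rewrite int_sum; last first.
  by move=> i; have := bddM (@bdd_cst R dT T (w i / 2)) (bddBi i).
rewrite big1 // => i _.
under eq_integral do rewrite EFinM.
rewrite (integralZl measurableT (bdd_int P (bddBi i))).
suff -> : (\int[P]_x (EFin \o (fun t : T => (Y i1 t ^+ 2 - Y i t ^+ 2)%R)) x = 0)%E.
  by rewrite mule0.
transitivity (\int[P]_x ((Y i1 x ^+ 2)%:E - (Y i x ^+ 2)%:E))%E.
  by apply: eq_integral => t _; rewrite /= EFinB.
have h1 := bdd_int P (bddsq (bddY i1)).
have h2 := bdd_int P (bddsq (bddY i)).
rewrite (integralB_EFin measurableT h1 h2) (EY2 i) subee //.
by apply: integrable_fin_num.
Qed.

Lemma cov_A : covariance P (U i1) (wsum w U) = (\int[P]_t (A t)%:E)%E.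
Proof.
rewrite cov_eq.
under eq_integral do rewrite decomp EFinD.
by rewrite (integralD measurableT (bdd_int P bddA) (bdd_int P bddB)) intB adde0.
Qed.

Lemma part1 : (0 <= covariance P (U i1) (wsum w U))%E.
Proof. by rewrite cov_A; apply: integral_ge0 => t _; rewrite lee_fin A_ge0. Qed.

Lemma key t : A t = 0 -> (forall i, V i t = U i t) ->
  wsum w U t = 2^-1 * \sum_i w i.
Proof.
move=> hA h.
have hY : forall i, i != i1 -> Y i t = - Y i1 t.
  move=> i hi.
  have h0 : w i / 2 * (Y i1 t + Y i t) ^+ 2 = 0.
    rewrite /A in hA; apply: (psumr_eq0P _ hA) => // j _.
    apply: mulr_ge0; last exact: sqr_ge0.
    by apply: divr_ge0; [exact: ltW | exact: ler0n].
  move/eqP: h0; rewrite mulf_eq0 => /orP[|].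
    by rewrite gt_eqF // divr_gt0 // ltr0n.
  by rewrite sqrf_eq0 addrC addr_eq0 => /eqP.
have hs : \sum_i w i * Y i t = 0.
  rewrite (bigD1 i1) //= (eq_bigr (fun i => - (w i * Y i1 t))); last first.
    by move=> i hi; rewrite hY // mulrN.
  rewrite sumrN -mulr_suml wrest; ring.
rewrite /wsum (eq_bigr (fun i => w i * Y i t + w i * m)); last first.
  by move=> i _; rewrite -h /Y; ring.
by rewrite big_split /= hs add0r -mulr_suml /m mulrC.
Qed.

Definition S := [set t | wsum w U t = 2^-1 * \sum_(i < n) w i].

Lemma mS : measurable S.
Proof.
have := mwsum measurableT (measurable_set1 (2^-1 * \sum_(i < n) w i)).
by rewrite setTI.
Qed.

Lemma part2 : covariance P (U i1) (wsum w U) = 0%E -> wCM w U.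
Proof.
rewrite cov_A => h0.
have hae : ae_eq P setT (fun t => (A t)%:E) (cst 0%E).
  apply/(ae_eq_integral_abs P measurableT).
    exact: (measurable_int _ (bdd_int P bddA)).
  rewrite -h0; apply: eq_integral => t _.
  by rewrite gee0_abs // lee_fin A_ge0.
have G : {ae P, forall t, (A t)%:E = 0%E /\ forall i, V i t = U i t}.
  by apply: filterS2 hae aeV => t h1 h2; split => //; exact: h1.
have nS : P (~` S) = 0%E.
  case: G => N [mN N0 sN].
  apply/eqP; rewrite -measure_le0 -N0 le_measure ?inE //; first exact: measurableC mS.
  move=> t nSt; apply: sN => -[hA hV]; apply: nSt; apply: key => //.
  by move: hA => [].
rewrite /wCM -/S -[S]setCK probability_setC ?nS ?sube0 //.
exact: measurableC mS.
Qed.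

Lemma part3 : wCM w U -> covariance P (U i1) (wsum w U) = 0%E.
Proof.
rewrite /wCM -/S => hS.
have negS : {ae P, forall t, S t}.
  exists (~` S); split => //; first exact: measurableC mS.
  by rewrite probability_setC ?hS ?subee //; exact: mS.
rewrite cov_eq.
transitivity (\int[P]_t (cst 0%E t))%E; last by rewrite integral0.
apply: ae_eq_integral => //.
- apply/measurable_EFinP; apply: measurable_funM; first by case: (bddY i1).
  apply: measurable_sum => i; apply: measurable_funM => //; by case: (bddY i).
- apply: filterS2 aeV negS => t hV hSt _ /=.
  suff -> : \sum_i w i * Y i t = 0 by rewrite mulr0.
  rewrite (eq_bigr (fun i => w i * U i t - w i * m)); last first.
    by move=> i _; rewrite /Y -hV mulrBr.
  rewrite sumrB -mulr_suml; move: hSt; rewrite /S /= /wsum => ->.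
  by rewrite /m mulrC subrr.
Qed.

End Main.

Unset Implicit Arguments.

Theorem mainTheorem9 (R : realType) (dT : measure_display) (T : measurableType dT)
  (P : probability T R) (d : nat) (hd : (2 <= d)%N) (i1 : 'I_d) (hi1 : val i1 = 0%N)
  (w : 'I_d -> R)
  (wpos : forall i, 0 < w i)
  (wmax : forall i, w i <= w i1)
  (wbal : 2 * w i1 = \sum_(i < d) w i)
  (U : 'I_d -> {RV P >-> R})
  (Uunif : forall i, uniform01 (U i)) :
  (0 <= covariance P (U i1) (wsum w U))%E /\
  (covariance P (U i1) (wsum w U) = 0%E <-> wCM w U).
Proof.
split; first by apply: part1.
split; first by apply: part2.
by apply: part3.
Qed.
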